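(* Let $M$ be a nonzero $\mathscr{D}(R,V)$-module such that $\pi M = (0)$. Then $\mathrm{Ann}_R(M) = \pi R$.
   Context: Let $(V, \pi V, k)$ be a DVR of mixed characteristic $(0,p)$ (i.e. $V$ has characteristic zero, maximal ideal generated by $\pi$, and residue field $k$ of characteristic $p>0$), and let $R$ be either $V[[x_1, \ldots, x_n]]$ or $V[x_1, \ldots, x_n]$ for some $n \geq 0$. $\mathscr{D}(R,V)$ denotes the ring of $V$-linear differential operators on $R$, and $\mathscr{D}(R,V)$-modules are left modules over it. *)

(* Defs.v *)
From HB Require Import structures.
From mathcomp Require Import all_boot all_order all_algebra.
From mathcomp Require Import mpoly.
Set Implicit Arguments. Unset Strict Implicit. Unset Printing Implicit Defensive.
Import Order.TTheory GRing.Theory Num.Theory.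
Local Open Scope ring_scope.

Definition is_DVR_with_uniformizer (V : idomainType) (pi : V) : Prop :=
  [/\ pi != 0, pi \isn't a GRing.unit &
      forall v : V, v != 0 ->
        exists (u : V) (k : nat), u \is a GRing.unit /\ v = u * pi ^+ k].

Definition char_zero (V : idomainType) : Prop := [pchar V] =i pred0.

(* residue field k = V / pi V has characteristic p *)
Definition residue_char (V : idomainType) (pi : V) (p : nat) : Prop :=
  prime p /\ exists w : V, p%:R = pi * w.

Definition pseries (n : nat) (V : Type) := 'X_{1..n} -> V.

Section PowerSeries.
Variables (V : comRingType) (n : nat).
Implicit Types f g : pseries n V.

Definition ps_add f g : pseries n V := fun m => f m + g m.
Definition ps_opp f : pseries n V := fun m => - f m.
Definition ps_zero : pseries n V := fun _ => 0.
Definition ps_mul f g : pseries n V := fun m =>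
  \sum_(a : 'X_{1..n < (mdeg m).+1} | (lem (a : 'X_{1..n}) m))
     f a * g (m - a)%MM.
Definition ps_const (c : V) : pseries n V :=
  fun m => if m == 0%MM then c else 0.
Definition ps_scale (c : V) f : pseries n V := fun m => c * f m.
End PowerSeries.

Section DiffOps.
Variables (V : comRingType) (R : Type).
Variables (add : R -> R -> R) (opp : R -> R) (mul : R -> R -> R)
          (scale : V -> R -> R).

Definition V_linear (d : R -> R) : Prop :=
  (forall f g, d (add f g) = add (d f) (d g)) /\
  (forall c f, d (scale c f) = scale c (d f)).

Definition commutator (d : R -> R) (r : R) : R -> R :=
  fun f => add (d (mul r f)) (opp (mul r (d f))).

Fixpoint diffop_of_order (k : nat) (d : R -> R) : Prop :=
  match k with
  | 0 => V_linear d /\ (forall r f, d (mul r f) = mul r (d f))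
  | k'.+1 => V_linear d /\ (forall r, diffop_of_order k' (commutator d r))
  end.

Definition is_diffop (d : R -> R) : Prop := exists k, diffop_of_order k d.

Definition is_DModule (M : zmodType) (act : (R -> R) -> M -> M) : Prop :=
  [/\ forall d, is_diffop d -> forall x y, act d (x + y) = act d x + act d y,
      forall d e, is_diffop d -> is_diffop e ->
        forall x, act (fun f => add (d f) (e f)) x = act d x + act e x,
      forall d e, is_diffop d -> is_diffop e ->
        forall x, act (d \o e) x = act d (act e x) &
      forall x, act id x = x].

Definition Ann_eq_piR (M : zmodType) (act : (R -> R) -> M -> M) (pi : R)
  : Prop :=
  forall r : R, (forall x : M, act (mul r) x = 0) <-> exists s : R, r = mul pi s.

End DiffOps.

(* Main.v *)
Require Import Defs.
From HB Require Import structures.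
From mathcomp Require Import all_boot all_order all_algebra.
From mathcomp Require Import mpoly.
From mathcomp Require Import boolp.
From mathcomp Require Import zify.
Import Order.TTheory GRing.Theory Num.Theory.
Local Open Scope ring_scope.
Set Implicit Arguments. Unset Strict Implicit. Unset Printing Implicit Defensive.

Section Core.
Variables (V : comRingType) (R : comRingType) (scale : V -> R -> R).
Hypothesis scaleD : forall c f g, scale c (f + g) = scale c f + scale c g.
Hypothesis scaleCA : forall c r f, scale c (r * f) = r * scale c f.

Local Notation ord k d := (@diffop_of_order V R +%R -%R *%R scale k d).
Local Notation isD d := (@is_diffop V R +%R -%R *%R scale d).

Lemma scale0 c : scale c 0 = 0.
Proof. by have := scaleCA c 0 0; rewrite !mul0r. Qed.

Lemma ord_ext k (d e : R -> R) : d =1 e -> ord k d -> ord k e.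
Proof. by move/funext->. Qed.

Lemma ord0_zero : ord 0 (fun _ => 0).
Proof.
split; first by split=> *; rewrite ?addr0 ?scale0.
by move=> r f; rewrite mulr0.
Qed.

Lemma ord_mono k d : ord k d -> ord k.+1 d.
Proof.
elim: k d => [|k IH] d /=.
  case=> Hl Hm; split => // r; apply: ord_ext ord0_zero => f.
  by rewrite /commutator Hm subrr.
by case=> Hl Hc; split => // r; exact: IH.
Qed.

Lemma ord_zero k : ord k (fun _ => 0).
Proof. elim: k => [|k IH]; [exact: ord0_zero | exact: ord_mono]. Qed.

Lemma ord_monoD k j d : ord k d -> ord (k + j) d.
Proof. by elim: j => [|j IH]; rewrite ?addn0 // addnS => /IH /ord_mono. Qed.

Lemma ord_add k d e : ord k d -> ord k e -> ord k (fun f => d f + e f).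
Proof.
elim: k d e => [|k IH] d e /=.
  case=> [[dD dZ] dM] [[eD eZ] eM]; split; first split.
  - by move=> f g; rewrite dD eD addrACA.
  - by move=> c f; rewrite dZ eZ scaleD.
  - by move=> r f; rewrite dM eM mulrDr.
case=> [[dD dZ] dC] [[eD eZ] eC]; split; first split.
- by move=> f g; rewrite dD eD addrACA.
- by move=> c f; rewrite dZ eZ scaleD.
move=> r; apply: ord_ext (IH _ _ (dC r) (eC r)) => f.
by rewrite /commutator mulrDr opprD addrACA.
Qed.

Lemma ord_mull k s d : ord k d -> ord k (fun f => s * d f).
Proof.
elim: k d => [|k IH] d /=.
  case=> [[dD dZ] dM]; split; first split.
  - by move=> f g; rewrite dD mulrDr.
  - by move=> c f; rewrite dZ scaleCA.
  - by move=> r f; rewrite dM mulrCA.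
case=> [[dD dZ] dC]; split; first split.
- by move=> f g; rewrite dD mulrDr.
- by move=> c f; rewrite dZ scaleCA.
move=> r; apply: ord_ext (IH _ (dC r)) => f.
by rewrite /commutator mulrDr mulrN mulrCA.
Qed.

Lemma ord_sum k N (F : nat -> R -> R) :
  (forall j, ord k (F j)) -> ord k (fun f => \sum_(j < N) F j f).
Proof.
move=> HF; elim: N => [|N IH].
  by apply: ord_ext (ord_zero k) => f; rewrite big_ord0.
by apply: ord_ext (ord_add IH (HF N)) => f; rewrite big_ord_recr.
Qed.

Lemma ord_id : ord 0 id.
Proof. by split. Qed.

Lemma isD_add d e : isD d -> isD e -> isD (fun f => d f + e f).
Proof.
move=> [k1 H1] [k2 H2]; exists (k1 + k2).
have H2' : ord (k1 + k2) e by rewrite addnC; apply: ord_monoD.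
exact: ord_add (ord_monoD k2 H1) H2'.
Qed.

Lemma isD_zero : isD (fun _ => 0).
Proof. by exists 0; exact: ord0_zero. Qed.

Lemma isD_sum N (F : nat -> R -> R) :
  (forall j, isD (F j)) -> isD (fun f => \sum_(j < N) F j f).
Proof.
move=> HF; elim: N => [|N [k IH]].
  by exists 0; apply: ord_ext ord0_zero => f; rewrite big_ord0.
have [k' Hk'] := HF N.
have := isD_add (ex_intro _ k IH) (ex_intro _ k' Hk') => -[j Hj].
by exists j; apply: ord_ext Hj => f; rewrite big_ord_recr.
Qed.

Lemma isD_mul r : isD ( *%R r).
Proof.
exists 0; split; first split.
- by move=> f g; rewrite mulrDr.
- by move=> c f; rewrite scaleCA.
- by move=> s f; rewrite mulrCA.
Qed.

Lemma isD_id : isD id.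
Proof. by exists 0; exact: ord_id. Qed.

Lemma isD_mull s d : isD d -> isD (fun f => s * d f).
Proof. by move=> [k Hk]; exists k; exact: ord_mull. Qed.

Section Hasse.
Variable H : nat -> R -> R.
Hypothesis HD : forall k f g, H k (f + g) = H k f + H k g.
Hypothesis HZ : forall k c f, H k (scale c f) = scale c (H k f).
Hypothesis H0 : forall f, H 0 f = f.
Hypothesis HL : forall k f g,
  H k (f * g) = \sum_(j < k.+1) H j f * H (k - j) g.

Lemma ordH k : forall j, (j <= k)%N -> ord k (H j).
Proof.
elim: k => [|k IH] j hj.
  move: hj; rewrite leqn0 => /eqP ->.
  by apply: ord_ext ord_id => f; rewrite H0.
case: (ltnP j k.+1) => hjk; first by apply: ord_mono; apply: IH.
have -> : j = k.+1 by apply/eqP; rewrite eqn_leq hj hjk.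
split; first by split; [exact: HD | exact: HZ].
move=> r.
apply: ord_ext (@ord_sum k k.+1
   (fun l f => H l.+1 r * H (k - l) f) _); last first.
  by move=> l; apply: ord_mull; apply: IH; apply: leq_subr.
move=> f; symmetry; rewrite /commutator HL big_ord_recl H0 subn0 /=.
rewrite addrAC subrr add0r; apply: eq_bigr => i _.
by rewrite /bump /= add1n subSS.
Qed.

Lemma isDH k : isD (H k).
Proof. by exists k; apply: ordH. Qed.

End Hasse.

Section Module.
Variables (M : zmodType) (act : (R -> R) -> M -> M).
Hypothesis HM : is_DModule +%R -%R *%R scale act.

Definition Ann (r : R) := forall x, act ( *%R r) x = 0.

Lemma act0 d : isD d -> act d 0 = 0.
Proof.
move=> hd; case: HM => h1 _ _ _; have E := h1 d hd 0 0.
by apply: (addrI (act d 0)); rewrite addr0 -E addr0.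
Qed.

Lemma act_comp d e x : isD d -> isD e ->
  act (fun f => d (e f)) x = act d (act e x).
Proof. by move=> hd he; case: HM => _ _ h3 _; apply: h3. Qed.

Lemma act_add d e x : isD d -> isD e ->
  act (fun f => d f + e f) x = act d x + act e x.
Proof. by move=> hd he; case: HM => _ h2 _ _; apply: h2. Qed.

Lemma act_zero x : act (fun _ => 0) x = 0.
Proof.
have E := act_add x isD_zero isD_zero.
have e : (fun _ : R => (0 : R) + 0) = (fun _ => 0) by apply: funext => f; rewrite addr0.
rewrite e in E.
by apply: (addrI (act (fun _ => 0) x)); rewrite addr0 -E.
Qed.

Lemma act_sum N (F : nat -> R -> R) x : (forall j, isD (F j)) ->
  act (fun f => \sum_(j < N) F j f) x = \sum_(j < N) act (F j) x.
Proof.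
move=> HF; elim: N => [|N IH].
  have -> : (fun f => \sum_(j < 0) F j f) = (fun _ => 0).
    by apply: funext => f; rewrite big_ord0.
  by rewrite act_zero big_ord0.
have -> : (fun f => \sum_(j < N.+1) F j f) =
          (fun f => (fun g => \sum_(j < N) F j g) f + F N f).
  by apply: funext => f; rewrite big_ord_recr.
by rewrite act_add ?IH ?big_ord_recr //; apply: isD_sum.
Qed.

Lemma act_id x : act id x = x.
Proof. by case: HM. Qed.

Lemma Ann_mul s r : Ann r -> Ann (s * r).
Proof.
move=> Ar x.
have -> : *%R (s * r) = (fun f => s * (r * f)) by apply: funext => f; rewrite mulrA.
by rewrite act_comp ?Ar ?act0 //; apply: isD_mul.
Qed.

Lemma Ann_add a b : Ann a -> Ann b -> Ann (a + b).
Proof.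
move=> Aa Ab x.
have -> : *%R (a + b) = (fun f => a * f + b * f) by apply: funext => f; rewrite mulrDl.
by rewrite act_add ?Aa ?Ab ?addr0 //; apply: isD_mul.
Qed.

Lemma Ann_opp a : Ann a -> Ann (- a).
Proof. by move=> Aa; rewrite -mulN1r; apply: Ann_mul. Qed.

Lemma Ann_sub a b : Ann a -> Ann b -> Ann (a - b).
Proof. by move=> Aa Ab; apply: Ann_add => //; apply: Ann_opp. Qed.

Lemma Ann1 : Ann 1 -> forall x : M, x = 0.
Proof.
move=> A1 x; have := A1 x.
have -> : *%R (1 : R) = id by apply: funext => f; rewrite mul1r.
by rewrite act_id.
Qed.

Lemma Ann_piR (pi s : R) : Ann pi -> Ann (pi * s).
Proof. by move=> Ap; rewrite mulrC; apply: Ann_mul. Qed.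

Section HasseAnn.
Variable H : nat -> R -> R.
Hypothesis HD : forall k f g, H k (f + g) = H k f + H k g.
Hypothesis HZ : forall k c f, H k (scale c f) = scale c (H k f).
Hypothesis H0 : forall f, H 0 f = f.
Hypothesis HL : forall k f g,
  H k (f * g) = \sum_(j < k.+1) H j f * H (k - j) g.

Lemma Ann_H k r : Ann r -> Ann (H k r).
Proof.
move=> Ar; elim/ltn_ind: k => k IH x.
have hD := isDH HD HZ H0 HL.
have E : act (fun f => H k (r * f)) x = 0.
  by rewrite (act_comp x (hD k) (isD_mul r)) Ar act0.
have e : (fun f => H k (r * f)) =
  (fun f => \sum_(j < k.+1) (fun j g => H j r * H (k - j) g) j f).
  by apply: funext => f; rewrite HL.
rewrite e (@act_sum k.+1 (fun j g => H j r * H (k - j) g) x) in E; last first.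
  by move=> j; apply: isD_mull.
rewrite big_ord_recr /= big1 ?add0r in E; last first.
  move=> j _; rewrite (act_comp x (isD_mul (H j r)) (hD _)).
  exact: IH.
move: E; rewrite subnn.
have -> : (fun g => H k r * H 0 g) = *%R (H k r).
  by apply: funext => g; rewrite H0.
by [].
Qed.

End HasseAnn.
End Module.
End Core.


Section CoefFold.
Variables (n : nat) (T : Type) (V : pzRingType) (coef : T -> 'X_{1..n} -> V)
  (Hi : 'I_n -> nat -> T -> T).
Hypothesis Hcoef : forall i k p m,
  coef (Hi i k p) m = 'C(m i + k, k)%:R * coef p (m + mnm1 i *+ k)%MM.

Lemma coef_fold (s : seq 'I_n) (al : 'X_{1..n}) p m : uniq s ->
  coef (foldr (fun i q => Hi i (al i) q) p s) m =
  (\prod_(i <- s) 'C(m i + al i, al i))%:R *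
     coef p (m + \sum_(i <- s) mnm1 i *+ al i)%MM.
Proof.
elim: s m => [|i s IH] m /=.
  by rewrite !big_nil mul1r addm0.
case/andP=> nis us; rewrite Hcoef IH // !big_cons natrM -mulrA.
congr (_ * (_ * _)).
  congr (_ %:R); apply: eq_big_seq => l ls.
  rewrite mnmDE mulmnE mnm1E; case: eqP => [ei|]; last by rewrite mul0n addn0.
  by rewrite ei ls in nis.
by rewrite addmA.
Qed.

Lemma coef_fold0 (al : 'X_{1..n}) p :
  coef (foldr (fun i q => Hi i (al i) q) p (index_enum 'I_n)) 0%MM = coef p al.
Proof.
rewrite coef_fold ?index_enum_uniq // add0m -multinomUE_id.
rewrite big1 ?mul1r // => i _; by rewrite mnm0E add0n binn.
Qed.

End CoefFold.

Section MpolyHasse.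
Variables (n : nat) (V : comNzRingType).
Implicit Types (p q : {mpoly V[n]}) (m a b : 'X_{1..n}).

Definition mH (i : 'I_n) (k : nat) p : {mpoly V[n]} :=
  \sum_(a <- msupp p) ('C(a i, k)%:R * p@_a) *: 'X_[a - mnm1 i *+ k].

Lemma mH_term i k a m : ('C(a i, k) != 0)%N -> (a - mnm1 i *+ k == m)%MM ->
   a = (m + mnm1 i *+ k)%MM.
Proof.
move=> hC /eqP <-; rewrite submK //; apply/mnm_lepP => l.
rewrite mulmnE mnm1E; case: eqP => [<-|]; last by rewrite mul0n.
by rewrite mul1n; move: hC; rewrite -lt0n bin_gt0.
Qed.

Lemma mH_coef i k p m :
  (mH i k p)@_m = 'C(m i + k, k)%:R * p@_(m + mnm1 i *+ k)%MM.
Proof.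
rewrite /mH raddf_sum /=.
rewrite (eq_big_seq (fun a => if a == (m + mnm1 i *+ k)%MM then
           'C(m i + k, k)%:R * p@_a else 0)); last first.
  move=> a _; rewrite mcoeffZ mcoeffX.
  case: (a =P (m + mnm1 i *+ k)%MM) => [->|ne].
    by rewrite addmK eqxx mulr1 mnmDE mulmnE mnm1E eqxx mul1n.
  case: (boolP ('C(a i, k) != 0)%N) => hC; last first.
    by move: hC; rewrite negbK => /eqP ->; rewrite !mul0r.
  case: (boolP (a - mnm1 i *+ k == m)%MM) => h; last by rewrite mulr0.
  by have := mH_term hC h.
case: (boolP ((m + mnm1 i *+ k)%MM \in msupp p)) => hin.
  rewrite (bigD1_seq (m + mnm1 i *+ k)%MM) ?msupp_uniq //= eqxx big1 ?addr0 //.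
  by move=> a /negbTE ->.
rewrite big1_seq ?(memN_msupp_eq0 hin) ?mulr0 //.
move=> a /= ain; case: eqP => // ea; by rewrite -ea ain in hin.
Qed.

Lemma mH_is_linear i k : linear (mH i k).
Proof.
move=> c p q; apply/mpolyP => m.
by rewrite mcoeffD mcoeffZ !mH_coef mcoeffD mcoeffZ mulrDr mulrCA.
Qed.

HB.instance Definition _ i k := GRing.isLinear.Build V {mpoly V[n]} {mpoly V[n]}
  _ (mH i k) (mH_is_linear i k).

Lemma mHD i k p q : mH i k (p + q) = mH i k p + mH i k q.
Proof. exact: raddfD. Qed.

Lemma mHZ i k c p : mH i k (c *: p) = c *: mH i k p.
Proof. exact: linearZ. Qed.

Lemma mH0 i p : mH i 0 p = p.
Proof.
by apply/mpolyP => m; rewrite mH_coef mulm0n addm0 addn0 bin0 mul1r.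
Qed.

Lemma mHX i k a : mH i k 'X_[a] = 'C(a i, k)%:R *: 'X_[a - mnm1 i *+ k].
Proof. by rewrite /mH msuppX big_seq1 mcoeffX eqxx mulr1. Qed.

Lemma mH_leibnizX i k a b :
  mH i k ('X_[a] * 'X_[b]) =
  \sum_(j < k.+1) mH i j 'X_[a] * mH i (k - j) 'X_[b].
Proof.
rewrite -mpolyXD mHX.
have E : forall j : 'I_k.+1, mH i j 'X_[a] * mH i (k - j) 'X_[b] =
  ('C(a i, j) * 'C(b i, k - j))%:R *: 'X_[a + b - mnm1 i *+ k].
  move=> j; rewrite !mHX -scalerAr -scalerAl scalerA -natrM mulnC -mpolyXD.
  case: (boolP ('C(a i, j) * 'C(b i, k - j) == 0)%N) => h.
    by rewrite (eqP h) mulr0n !scale0r.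
  congr (_ *: 'X_[_]); apply/mnmP => l.
  move: h; rewrite muln_eq0 negb_or -!lt0n !bin_gt0 => /andP[h1 h2].
  have hj := ltn_ord j.
  rewrite !(mnmDE, mnmBE, mulmnE, mnm1E).
  case: eqP => [<-|_]; last by rewrite !mul0n !subn0.
  rewrite !mul1n; lia.
rewrite (eq_bigr _ (fun j _ => E j)) -scaler_suml -natr_sum.
by rewrite mnmDE (binomial.Vandermonde (a i) (b i) k).
Qed.

Lemma mH_leibniz i k p q :
  mH i k (p * q) = \sum_(j < k.+1) mH i j p * mH i (k - j) q.
Proof.
move: (mpolyE p) (mpolyE q) => Ep Eq; rewrite Ep Eq.
rewrite mulr_suml.
under eq_bigr do rewrite mulr_sumr.
rewrite !raddf_sum /=.
under eq_bigr do rewrite raddf_sum /=.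
under [RHS]eq_bigr do rewrite !raddf_sum /= big_distrlr.
rewrite [RHS]exchange_big /=.
apply: eq_bigr => a _.
rewrite [RHS]exchange_big /=.
apply: eq_bigr => b _.
rewrite -scalerAl -scalerAr !linearZ /= mH_leibnizX.
rewrite !scaler_sumr; apply: eq_bigr => j _.
by rewrite !linearZ /= -scalerAr -scalerAl.
Qed.

End MpolyHasse.


Section PSTrunc.
Variables (n : nat) (V : comNzRingType).
Implicit Types (f g h : pseries n V) (m a b : 'X_{1..n}).

Definition tr (K : nat) f : {mpoly V[n]} :=
  \sum_(a : 'X_{1..n < K.+1}) f a *: 'X_[a].

Lemma tr_coef K f m : (tr K f)@_m = if (mdeg m <= K)%N then f m else 0.
Proof.
case: leqP => h.
  by rewrite /tr (mcoeff_mpoly (fun a => f a)).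
rewrite /tr raddf_sum /= big1 // => a _.
rewrite mcoeffZ mcoeffX; case: eqP => [ea|]; last by rewrite mulr0.
by have := bmdeg a; rewrite ea ltnS leqNgt h.
Qed.

Lemma tr_coef_le K f m : (mdeg m <= K)%N -> (tr K f)@_m = f m.
Proof. by move=> h; rewrite tr_coef h. Qed.

Lemma ps_mul_tr K f g m : (mdeg m <= K)%N ->
  ps_mul f g m = (tr K f * tr K g)@_m.
Proof.
move=> hK; rewrite mcoeffM /ps_mul.
set d := mdeg m.
have hb : forall a : 'X_{1..n < d.+1}, (mdeg a <= K)%N.
  by move=> a; apply: leq_trans hK; have := bmdeg a; rewrite ltnS.
rewrite [RHS](eq_bigr (fun k : 'X_{1..n < d.+1} * 'X_{1..n < d.+1} => f k.1 * g k.2)); last first.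
  by move=> k _; rewrite !tr_coef_le.
transitivity (\sum_(a : 'X_{1..n < d.+1})
     \sum_(b : 'X_{1..n < d.+1} | m == (val a + val b)%MM) f a * g b); last first.
  by rewrite pair_big_dep.
rewrite big_mkcond /=; apply: eq_bigr => a _.
case: (boolP (val a <= m)%MM) => ham.
  have hb0 : (mdeg (m - a)%MM < d.+1)%N by rewrite ltnS mdegB.
  rewrite (big_pred1 (Sub (m - a)%MM hb0 : 'X_{1..n < d.+1})) //.
  move=> b /=; apply/eqP/eqP => [e|eb].
    apply: val_inj; rewrite SubK /=. move: e => ->. by rewrite addmC addmK.
  by rewrite eb /= addmC submK.
rewrite big_pred0 // => b; apply/negbTE/eqP => eb.
by move: ham; rewrite eb lem_addr.
Qed.

Lemma mcoeffM_congr K (p p' q q' : {mpoly V[n]}) m : (mdeg m <= K)%N ->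
  (forall a, (mdeg a <= K)%N -> p@_a = p'@_a) ->
  (forall a, (mdeg a <= K)%N -> q@_a = q'@_a) ->
  (p * q)@_m = (p' * q')@_m.
Proof.
move=> hK hp hq; rewrite !mcoeffM; apply: eq_bigr => k _.
have hb : forall a : 'X_{1..n < (mdeg m).+1}, (mdeg a <= K)%N.
  by move=> a; apply: leq_trans hK; have := bmdeg a; rewrite ltnS.
by rewrite (hp _ (hb k.1)) (hq _ (hb k.2)).
Qed.

Lemma tr_mul K f g a : (mdeg a <= K)%N ->
  (tr K (ps_mul f g))@_a = (tr K f * tr K g)@_a.
Proof. by move=> h; rewrite tr_coef_le // (ps_mul_tr _ _ h). Qed.

Lemma ps_mulA f g h : ps_mul (ps_mul f g) h = ps_mul f (ps_mul g h).
Proof.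
apply: funext => m; set K := mdeg m.
rewrite (ps_mul_tr _ _ (leqnn K)) (ps_mul_tr f _ (leqnn K)).
rewrite (@mcoeffM_congr K _ (tr K f * tr K g) _ (tr K h)) //; last by move=> a ha; apply: tr_mul.
rewrite -mulrA; apply: (mcoeffM_congr (leqnn K)) => a ha //.
by rewrite tr_mul.
Qed.

Lemma ps_mulC f g : ps_mul f g = ps_mul g f.
Proof.
by apply: funext => m; rewrite !(ps_mul_tr _ _ (leqnn (mdeg m))) mulrC.
Qed.

Lemma tr_const K c a : (mdeg a <= K)%N -> (tr K (@ps_const V n c))@_a = (c%:MP)@_a.
Proof.
move=> h; rewrite tr_coef_le // mcoeffC /ps_const.
by case: eqP; rewrite ?mulr1 ?mulr0.
Qed.

Lemma ps_mulCl c f m : ps_mul (@ps_const V n c) f m = c * f m.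
Proof.
rewrite (ps_mul_tr _ _ (leqnn (mdeg m))).
rewrite (@mcoeffM_congr (mdeg m) _ (c%:MP) _ (tr (mdeg m) f)) //; last first.
  by move=> a ha; apply: tr_const.
by rewrite mcoeffCM tr_coef_le.
Qed.

Lemma ps_mul1 f : ps_mul (@ps_const V n 1) f = f.
Proof. by apply: funext => m; rewrite ps_mulCl mul1r. Qed.

Lemma ps_mulDl f g h :
  ps_mul (ps_add f g) h = ps_add (ps_mul f h) (ps_mul g h).
Proof.
apply: funext => m; rewrite /ps_mul /ps_add -big_split /=.
by apply: eq_bigr => a _; rewrite mulrDl.
Qed.

End PSTrunc.

Section PSRing.
Variables (n : nat) (V : comNzRingType).
Definition PS := pseries n V.
HB.instance Definition _ := gen_eqMixin PS.
HB.instance Definition _ := gen_choiceMixin PS.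

Lemma ps_addA : associative (@ps_add V n : PS -> PS -> PS).
Proof. by move=> f g h; apply: funext => m; rewrite /ps_add addrA. Qed.
Lemma ps_addC : commutative (@ps_add V n : PS -> PS -> PS).
Proof. by move=> f g; apply: funext => m; rewrite /ps_add addrC. Qed.
Lemma ps_add0 : left_id (@ps_zero V n : PS) (@ps_add V n).
Proof. by move=> f; apply: funext => m; rewrite /ps_add /ps_zero add0r. Qed.
Lemma ps_addN : left_inverse (@ps_zero V n : PS) (@ps_opp V n) (@ps_add V n).
Proof. by move=> f; apply: funext => m; rewrite /ps_add /ps_opp /ps_zero addNr. Qed.

HB.instance Definition _ := GRing.isZmodule.Build PS ps_addA ps_addC ps_add0 ps_addN.

Lemma ps_mulA' : associative (@ps_mul V n : PS -> PS -> PS).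
Proof. by move=> f g h; rewrite ps_mulA. Qed.
Lemma ps_mulC' : commutative (@ps_mul V n : PS -> PS -> PS).
Proof. by move=> f g; rewrite ps_mulC. Qed.
Lemma ps_mul1' : left_id (@ps_const V n 1 : PS) (@ps_mul V n).
Proof. by move=> f; rewrite ps_mul1. Qed.
Lemma ps_mulDl' : left_distributive (@ps_mul V n : PS -> PS -> PS) +%R.
Proof. by move=> f g h; rewrite /= ps_mulDl. Qed.
Lemma ps_one_neq0 : (@ps_const V n 1 : PS) != 0.
Proof.
apply/eqP => e; have := congr1 (fun f : PS => f 0%MM) e.
by rewrite /ps_const eqxx /= /ps_zero => /eqP; rewrite oner_eq0.
Qed.

HB.instance Definition _ := GRing.Zmodule_isComNzRing.Build PS
  ps_mulA' ps_mulC' ps_mul1' ps_mulDl' ps_one_neq0.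

Lemma ps_sumE (I : Type) (r : seq I) (P : pred I) (F : I -> PS) m :
  (\sum_(j <- r | P j) F j) m = \sum_(j <- r | P j) F j m.
Proof. by elim/big_rec2: _ => // j y1 y2 _ <-. Qed.

Definition pH (i : 'I_n) (k : nat) (f : PS) : PS :=
  fun m => 'C(m i + k, k)%:R * f (m + mnm1 i *+ k)%MM.

Lemma pHD i k (f g : PS) : pH i k (f + g) = pH i k f + pH i k g.
Proof. by apply: funext => m; rewrite /pH /= /ps_add mulrDr. Qed.

Lemma pHZ i k c (f : PS) : pH i k (ps_scale c f) = ps_scale c (pH i k f).
Proof. by apply: funext => m; rewrite /pH /ps_scale mulrCA. Qed.

Lemma pH0 i (f : PS) : pH i 0 f = f.
Proof. by apply: funext => m; rewrite /pH mulm0n addm0 addn0 bin0 mul1r. Qed.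

Lemma mdegUn (i : 'I_n) k : mdeg (mnm1 i *+ k)%MM = k.
Proof. by rewrite mdegMn mdeg1 mul1n. Qed.

Lemma pH_leibniz i k (f g : PS) :
  pH i k (f * g) = \sum_(j < k.+1) pH i j f * pH i (k - j) g.
Proof.
apply: funext => m; rewrite ps_sumE.
set K := (mdeg m + k)%N.
have hK : (mdeg (m + mnm1 i *+ k)%MM <= K)%N by rewrite mdegD mdegUn.
rewrite /pH [X in _ * X](ps_mul_tr _ _ hK) -mH_coef mH_leibniz raddf_sum /=.
apply: eq_bigr => j _.
have hj : (j <= k)%N by rewrite -ltnS.
rewrite [RHS](ps_mul_tr _ _ (leqnn (mdeg m))).
apply: (mcoeffM_congr (leqnn (mdeg m))) => a ha.
  rewrite mH_coef tr_coef_le ?tr_coef_le //.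
  by rewrite mdegD mdegUn /K; apply: leq_add.
rewrite mH_coef tr_coef_le ?tr_coef_le //.
by rewrite mdegD mdegUn /K; apply: leq_add => //; apply: leq_subr.
Qed.

Lemma ps_scaleD c (f g : PS) : ps_scale c (f + g) = (ps_scale c f : PS) + ps_scale c g.
Proof. by apply: funext => m; rewrite /ps_scale /= /ps_add mulrDr. Qed.

Lemma ps_scaleCA c (r f : PS) : ps_scale c (r * f) = r * (ps_scale c f : PS).
Proof.
apply: funext => m; rewrite /ps_scale /= /ps_mul mulr_sumr.
by apply: eq_bigr => a _; rewrite mulrCA.
Qed.

End PSRing.

Section PSInv.
Variables (n : nat) (V : comUnitRingType).
Variable u : PS n V.

Fixpoint vaux (N : nat) (m : 'X_{1..n}) : V :=
  match N with
  | 0 => if m == 0%MM then (u 0%MM)^-1 else 0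
  | N'.+1 => (u 0%MM)^-1 * ((m == 0%MM)%:R -
      \sum_(a : 'X_{1..n < (mdeg m).+1} | (val a <= m)%MM && (val a != 0%MM))
          u a * vaux N' (m - a)%MM)
  end.

Lemma mdeg_subm (a m : 'X_{1..n}) : (a <= m)%MM -> a != 0%MM ->
  (mdeg (m - a)%MM < mdeg m)%N.
Proof.
move=> ham ha0; have := congr1 mdeg (submK ham); rewrite mdegD => <-.
by rewrite -addn1 leq_add2l lt0n mdeg_eq0.
Qed.

Lemma lem0_eq (a : 'X_{1..n}) : (a <= 0%MM)%MM -> a = 0%MM.
Proof.
move/mnm_lepP => h; apply/mnmP => i; rewrite mnm0E.
by apply/eqP; rewrite -leqn0 -(mnm0E i); apply: h.
Qed.

Lemma vauxS N m : vaux N.+1 m = (u 0%MM)^-1 * ((m == 0%MM)%:R -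
      \sum_(a : 'X_{1..n < (mdeg m).+1} | (val a <= m)%MM && (val a != 0%MM))
          u a * vaux N (m - a)%MM).
Proof. by []. Qed.

Lemma vaux_stable N m : (mdeg m <= N)%N -> vaux N.+1 m = vaux N m.
Proof.
elim: N m => [|N IH] m hm.
  move: hm; rewrite leqn0 mdeg_eq0 => /eqP ->.
  rewrite /= eqxx big_pred0 ?subr0 ?mulr1 // => a.
  by apply/negbTE; apply/negP => /andP[/lem0_eq -> /negP].
rewrite vauxS [RHS]vauxS; congr (_ * (_ - _)); apply: eq_bigr => a /andP[ham ha0].
rewrite IH //; have h : (mdeg (m - a) < mdeg m)%N := mdeg_subm ham ha0; lia.
Qed.

Lemma vaux_ge N m : (mdeg m <= N)%N -> vaux N m = vaux (mdeg m) m.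
Proof.
elim: N => [|N IH] h.
  by move: h; rewrite leqn0 => /eqP ->.
case: (leqP (mdeg m) N) => h'.
  by rewrite vaux_stable // IH.
by have -> : mdeg m = N.+1 by apply/eqP; rewrite eqn_leq h h'.
Qed.

Definition pinv : PS n V := fun m => vaux (mdeg m) m.

Lemma pinvK : u 0%MM \is a GRing.unit -> u * pinv = 1.
Proof.
move=> hu; apply: funext => m; change (ps_mul u pinv m = @ps_const V n 1 m).
rewrite /ps_mul /ps_const.
have h0 : (mdeg (0%MM : 'X_{1..n}) < (mdeg m).+1)%N by rewrite mdeg0.
have h0m : (0%MM <= m)%MM by apply/mnm_lepP => i; rewrite mnm0E.
rewrite (bigD1 (Sub 0%MM h0 : 'X_{1..n < (mdeg m).+1})) /=; last by [].
rewrite subm0 /pinv.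
rewrite (eq_bigl (fun i : 'X_{1..n < (mdeg m).+1} => (val i <= m)%MM && (val i != 0%MM))); last first.
  by move=> a; congr (_ && _); rewrite -val_eqE.
clear h0.
have [E|[N E]] : mdeg m = 0%N \/ exists N, mdeg m = N.+1.
  by case: (mdeg m) => [|N]; [left | right; exists N].
  have m0 : m = 0%MM by apply/eqP; rewrite -mdeg_eq0 E.
  rewrite big_pred0; last first.
    have mi : forall i, m i = 0%N by move=> i; rewrite m0 mnm0E.
    move=> a; apply/negbTE/negP => /andP[/mnm_lepP ham]; apply/negP; rewrite negbK.
    apply/eqP/mnmP => i; rewrite mnm0E; apply/eqP; rewrite -leqn0 -(mi i); exact: ham.
  by rewrite addr0 E /= m0 eqxx mulrV.
have -> : vaux (mdeg m) m = vaux N.+1 m by rewrite E.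
rewrite vauxS mulVKr //.
have -> : \sum_(i : 'X_{1..n < (mdeg m).+1} | (val i <= m)%MM && (val i != 0%MM))
   u i * vaux (mdeg (m - i)%MM) (m - i)%MM =
   \sum_(a : 'X_{1..n < (mdeg m).+1} | (val a <= m)%MM && (val a != 0%MM))
          u a * vaux N (m - a)%MM.
  apply: eq_bigr => a /andP[ham ha0]; rewrite (@vaux_ge N (m - a)%MM) //.
  have h : (mdeg (m - a) < mdeg m)%N := mdeg_subm ham ha0.
  lia.
by rewrite subrK; case: eqP.
Qed.

End PSInv.


Lemma Ann_fold (V R : comNzRingType) (scale : V -> R -> R)
  (sD : forall c f g, scale c (f + g) = scale c f + scale c g)
  (sCA : forall c r f, scale c (r * f) = r * scale c f)
  (M : zmodType) (act : (R -> R) -> M -> M)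
  (HM : is_DModule +%R -%R *%R scale act) (n : nat)
  (Hi : 'I_n -> nat -> R -> R)
  (HD : forall i k f g, Hi i k (f + g) = Hi i k f + Hi i k g)
  (HZ : forall i k c f, Hi i k (scale c f) = scale c (Hi i k f))
  (H0 : forall i f, Hi i 0 f = f)
  (HL : forall i k f g, Hi i k (f * g) = \sum_(j < k.+1) Hi i j f * Hi i (k - j)%N g)
  (al : 'X_{1..n}) (s : seq 'I_n) (r : R) :
  Ann act r -> Ann act (foldr (fun i q => Hi i (al i) q) r s).
Proof.
move=> Ar; elim: s => //= i s IH.
exact: (Ann_H sD sCA HM (HD i) (HZ i) (H0 i) (HL i) (al i) IH).
Qed.

Lemma seq_argmax (T : eqType) (s : seq T) (x : T) (F : T -> nat) :
  x \in s -> exists2 y, y \in s & forall z, z \in s -> (F z <= F y)%N.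
Proof.
elim: s x => // a s IH x _.
case: s IH => [|b s] IH.
  by exists a; rewrite ?inE ?eqxx // => z; rewrite inE => /eqP ->.
have [y ys hy] := IH b (mem_head b s).
case: (leqP (F a) (F y)) => h.
  exists y; first by rewrite inE ys orbT.
  by move=> z; rewrite inE => /orP[/eqP ->|/hy].
exists a; first by rewrite inE eqxx.
move=> z; rewrite inE => /orP[/eqP ->//|/hy hz].
by apply: leq_trans hz (ltnW h).
Qed.

Section DVR.
Variables (V : idomainType) (pi : V).
Hypothesis HV : is_DVR_with_uniformizer pi.

Lemma nonunit_div v : v \isn't a GRing.unit -> exists w, v = pi * w.
Proof.
move=> hv; case: (eqVneq v 0) => [->|nz]; first by exists 0; rewrite mulr0.
case: HV => _ _ /(_ v nz) [u [[|k] [hu ev]]].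
  by move: hv; rewrite ev expr0 mulr1 hu.
by exists (u * pi ^+ k); rewrite ev exprS mulrCA.
Qed.

End DVR.

Lemma mpoly_div (n : nat) (V : comNzRingType) (pi : V) (p : {mpoly V[n]}) :
  (forall m, exists w, p@_m = pi * w) -> exists g, p = pi%:MP * g.
Proof.
move=> hd; exists (\sum_(m <- msupp p) (sval (cid (hd m))) *: 'X_[m]).
rewrite {1}[p]mpolyE mulr_sumr; apply: eq_bigr => m _.
by rewrite mul_mpolyC scalerA -(svalP (cid (hd m))).
Qed.

Lemma mpoly_branch (V : idomainType) (pi : V) (n : nat)
  (HV : is_DVR_with_uniformizer pi) (M : zmodType)
  (act : ({mpoly V[n]} -> {mpoly V[n]}) -> M -> M) :
  is_DModule (V := V) +%R -%R *%R *:%R act ->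
  (exists x : M, x != 0) ->
  (forall x : M, act ( *%R pi%:MP) x = 0) ->
  Ann_eq_piR *%R act pi%:MP.
Proof.
move=> HM [x0 nx0] Hpi r.
have sD : forall (c : V) (f g : {mpoly V[n]}), c *: (f + g) = c *: f + c *: g.
  by move=> c f g; rewrite scalerDr.
have sCA : forall (c : V) (r f : {mpoly V[n]}), c *: (r * f) = r * (c *: f).
  by move=> c r' f; rewrite scalerAr.
have Api : Ann act (pi%:MP : {mpoly V[n]}) by [].
split; last first.
  by move=> [s ->]; apply: (Ann_piR sCA HM).
move=> Ar.
have [[m hm]|none] := pselect (exists m, r@_m \is a GRing.unit); last first.
  apply: mpoly_div => m; apply: (nonunit_div HV); apply/negP => h.
  by apply: none; exists m.
exfalso; move/negP: nx0; apply; apply/eqP.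
apply: (Ann1 HM).
set S := [seq m <- msupp r | r@_m \is a GRing.unit].
have mS : m \in S.
  rewrite mem_filter hm mcoeff_msupp /=; apply/eqP => e.
  by move: hm; rewrite e unitr0.
have [al alS halmax] := seq_argmax mdeg mS.
have alu : r@_al \is a GRing.unit by move: alS; rewrite mem_filter => /andP[].
set c := foldr (fun i q => mH i (al i) q) r (index_enum 'I_n).
have Ac : Ann act c.
  apply: (Ann_fold sD sCA HM) => //.
  - by move=> i k f g; apply: mHD.
  - by move=> i k c' f; apply: mHZ.
  - by move=> i f; apply: mH0.
  - by move=> i k f g; apply: mH_leibniz.
have ccoef : forall m', c@_m' = (\prod_(i <- index_enum 'I_n) 'C(m' i + al i, al i))%:R *
     r@_(m' + \sum_(i <- index_enum 'I_n) mnm1 i *+ al i)%MM.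
  move=> m'; apply: (coef_fold (coef := fun p m => p@_m)) => //.
    by move=> i k p m0; apply: mH_coef.
  exact: index_enum_uniq.
have c0 : c@_0%MM = r@_al.
  by apply: (coef_fold0 (coef := fun p m => p@_m)) => i k p m0; apply: mH_coef.
have [g eg] : exists g, c - (r@_al)%:MP = pi%:MP * g.
  apply: mpoly_div => m'; rewrite mcoeffB mcoeffC.
  case: (eqVneq m' 0%MM) => [->|nz].
    by exists 0; rewrite c0 mulr1 subrr mulr0.
  rewrite mulr0 subr0 ccoef -multinomUE_id.
  have : r@_(m' + al)%MM \isn't a GRing.unit.
    apply/negP => hu.
    have : (m' + al)%MM \in S.
      rewrite mem_filter hu mcoeff_msupp /=; apply/eqP => e.
      by move: hu; rewrite e unitr0.
    move/halmax; rewrite mdegD.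
    have : (0 < mdeg m')%N by rewrite lt0n mdeg_eq0.
    lia.
  move/(nonunit_div HV) => [w ->].
  by exists ((\prod_(i <- index_enum 'I_n) 'C(m' i + al i, al i))%:R * w); rewrite mulrCA.
have AC : Ann act ((r@_al)%:MP : {mpoly V[n]}).
  have -> : (r@_al)%:MP = c - pi%:MP * g by rewrite -eg opprB addrC subrK.
  apply: (Ann_sub sCA HM) => //; exact: (Ann_piR sCA HM).
have -> : (1 : {mpoly V[n]}) = ((r@_al)^-1)%:MP * (r@_al)%:MP.
  by rewrite -mpolyCM mulVr.
exact: (Ann_mul sCA HM).
Qed.

Lemma ps_branch (V : idomainType) (pi : V) (n : nat)
  (HV : is_DVR_with_uniformizer pi) (M : zmodType)
  (act : (pseries n V -> pseries n V) -> M -> M) :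
  is_DModule (@ps_add V n) (@ps_opp V n) (@ps_mul V n) (@ps_scale V n) act ->
  (exists x : M, x != 0) ->
  (forall x : M, act (ps_mul (@ps_const V n pi)) x = 0) ->
  Ann_eq_piR (@ps_mul V n) act (@ps_const V n pi).
Proof.
move=> HM0 [x0 nx0] Hpi r.
have HM : is_DModule (R := PS n V) +%R -%R *%R (@ps_scale V n) act := HM0.
have sD := @ps_scaleD n V.
have sCA := @ps_scaleCA n V.
have Api : Ann (R := PS n V) act (@ps_const V n pi) := Hpi.
split; last first.
  move=> [s ->]; exact: (@Ann_piR V (PS n V) _ sCA M act HM _ s Api).
move=> Ar0; have Ar : Ann (R := PS n V) act r := Ar0.
have [[m hm]|none] := pselect (exists m, r m \is a GRing.unit); last first.
  have hd : forall m, exists w, r m = pi * w.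
    move=> m; apply: (nonunit_div HV); apply/negP => h.
    by apply: none; exists m.
  exists (fun m => sval (cid (hd m))); apply: funext => m'.
  by rewrite ps_mulCl -(svalP (cid (hd m'))).
exfalso; move/negP: nx0; apply; apply/eqP.
apply: (Ann1 HM).
set c := foldr (fun i q => @pH n V i (m i) q) (r : PS n V) (index_enum 'I_n).
have Ac : Ann (R := PS n V) act c.
  apply: (Ann_fold sD sCA HM) => //.
  - by move=> i k f g; apply: pHD.
  - by move=> i k c' f; apply: pHZ.
  - by move=> i f; apply: pH0.
  - by move=> i k f g; apply: pH_leibniz.
have c0 : c 0%MM = r m.
  by apply: (coef_fold0 (coef := fun (p : PS n V) m => p m)).
have cu : c 0%MM \is a GRing.unit by rewrite c0.
have -> : (1 : PS n V) = pinv c * c by rewrite mulrC pinvK.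
exact: (Ann_mul sCA HM).
Qed.

Unset Implicit Arguments.
Set Strict Implicit.

Theorem lemma3p4 (V : idomainType) (pi : V) (p : nat) (n : nat)
  (HV : is_DVR_with_uniformizer pi) (H0 : char_zero V)
  (Hp : residue_char pi p) :
  (forall (M : zmodType) (act : ({mpoly V[n]} -> {mpoly V[n]}) -> M -> M),
     is_DModule (V := V) +%R -%R *%R *:%R act ->
     (exists x : M, x != 0) ->
     (forall x : M, act ( *%R pi%:MP) x = 0) ->
     Ann_eq_piR *%R act pi%:MP)
  /\
  (forall (M : zmodType) (act : (pseries n V -> pseries n V) -> M -> M),
     is_DModule (@ps_add V n) (@ps_opp V n) (@ps_mul V n) (@ps_scale V n) act ->
     (exists x : M, x != 0) ->
     (forall x : M, act (ps_mul (@ps_const V n pi)) x = 0) ->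
     Ann_eq_piR (@ps_mul V n) act (@ps_const V n pi)).
Proof.
split=> M act; [exact: mpoly_branch | exact: ps_branch].
Qed.
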